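(* Let $(u_0,v_0)=(e_4+e_{13},\,e_6+e_{15})\in\mathcal Z(\mathbb S)$ and let $g$ be the left-invariant metric on $G_2$ defined on $\mathfrak g_2$ by $g(X,Y)=\langle X\cdot(u_0,v_0),\,Y\cdot(u_0,v_0)\rangle_{\mathbb R^{32}}$ (i.e. the pullback of the induced metric of $\mathcal Z(\mathbb S)\subset\mathbb R^{32}$ under the diffeomorphism $h\mapsto h\cdot(u_0,v_0)$). Then $(G_2,g)$ (equivalently $\mathcal Z(\mathbb S)$) has positive Ricci curvature, and its Ricci tensor, as a left-invariant symmetric bilinear form on $\mathfrak g_2$, is $$\mathrm{Ric}=\frac52\sum_{i=0}^2 X^i\otimes X^i+\frac{29}{54}\sum_{i=3}^5 X^i\otimes X^i+\frac56\sum_{i=6}^{13}X^i\otimes X^i .$$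
   Context: Cayley–Dickson algebras: $\mathbb A_0=\mathbb R$, $a^*=a$; $\mathbb A_n=\mathbb A_{n-1}\times\mathbb A_{n-1}$ with $(a,b)(c,d)=(ac-d^*b,\ da+bc^* )$, $(a,b)^*=(a^*,-b)$; canonical basis $e_i=(e_i,0)$, $e_{2^{n-1}+i}=(0,e_i)$ for $0\le i<2^{n-1}$. $\mathbb O=\mathbb A_3$, $\mathbb S=\mathbb A_4\cong\mathbb R^{16}$ (sedenions) with standard inner product. $\mathcal Z(\mathbb S)=\{(u,v)\in\mathbb S\times\mathbb S:\|u\|=\|v\|=\sqrt2,\ uv=0\}$ with metric induced from $\mathbb R^{32}$. $G_2=\mathrm{Aut}(\mathbb O)\subset\mathrm{SO}(8)$ (matrices w.r.t. $e_0,\dots,e_7$), acting on $\mathbb S=\mathbb O\times\mathbb O$ by $h(a,b)=(ha,hb)$ and diagonally on $\mathbb S\times\mathbb S$; this action is simply transitive on $\mathcal Z(\mathbb S)$. Its Lie algebra $\mathfrak g_2\subset\mathfrak{so}(8)$ acts likewise: $X\cdot(a,b)=(Xa,Xb)$. For $0\le i<j\le7$ let $E_{ij}\in\mathfrak{so}(8)$ have $(E_{ij})_{ij}=-1$, $(E_{ij})_{ji}=1$ and all other entries $0$ (rows/columns indexed $0,\dots,7$). The basis $X_0,\dots,X_{13}$ of $\mathfrak g_2$ is: $X_0=\tfrac12(E_{45}+E_{67})$, $X_1=\tfrac12(E_{46}-E_{57})$, $X_2=\tfrac12(E_{47}+E_{56})$, $X_3=-\tfrac{\sqrt3}6(2E_{23}-E_{45}+E_{67})$,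 $X_4=\tfrac{\sqrt3}6(2E_{13}+E_{46}+E_{57})$, $X_5=-\tfrac{\sqrt3}6(2E_{12}-E_{47}+E_{56})$, $X_6=-\tfrac12(E_{17}-E_{24})$, $X_7=\tfrac12(E_{16}+E_{25})$, $X_8=-\tfrac12(E_{15}-E_{26})$, $X_9=\tfrac12(E_{14}+E_{27})$, $X_{10}=\tfrac{\sqrt3}6(E_{16}-E_{25}+2E_{34})$, $X_{11}=\tfrac{\sqrt3}6(E_{17}+E_{24}+2E_{35})$, $X_{12}=-\tfrac{\sqrt3}6(E_{14}-E_{27}-2E_{36})$, $X_{13}=-\tfrac{\sqrt3}6(E_{15}+E_{26}-2E_{37})$; it is orthonormal for $-\mathrm{tr}(XY)$. $X^0,\dots,X^{13}$ denotes the dual basis. *)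

(* Defs.v *)
(* Left-invariant Riemannian geometry on G2 done algebraically
   on its Lie algebra g2 (spanned by the 14 given 8x8 matrices). *)
From HB Require Import structures.
From mathcomp Require Import all_boot all_order all_algebra.
Set Implicit Arguments. Unset Strict Implicit. Unset Printing Implicit Defensive.
Import Order.TTheory GRing.Theory Num.Theory.
Local Open Scope ring_scope.

Section G2.
Variable R : rcfType.

Definition Emx (i j : nat) : 'M[R]_8 :=
  \matrix_(r, c) (if (r == i :> nat) && (c == j :> nat) then -1
                  else if (r == j :> nat) && (c == i :> nat) then 1 else 0).

Definition s3 : R := Num.sqrt 3.

Definition Xn (n : nat) : 'M[R]_8 :=
  match n with
  | 0 => 2^-1 *: (Emx 4 5 + Emx 6 7)
  | 1 => 2^-1 *: (Emx 4 6 - Emx 5 7)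
  | 2 => 2^-1 *: (Emx 4 7 + Emx 5 6)
  | 3 => - (s3 / 6) *: (2 *: Emx 2 3 - Emx 4 5 + Emx 6 7)
  | 4 => (s3 / 6) *: (2 *: Emx 1 3 + Emx 4 6 + Emx 5 7)
  | 5 => - (s3 / 6) *: (2 *: Emx 1 2 - Emx 4 7 + Emx 5 6)
  | 6 => - 2^-1 *: (Emx 1 7 - Emx 2 4)
  | 7 => 2^-1 *: (Emx 1 6 + Emx 2 5)
  | 8 => - 2^-1 *: (Emx 1 5 - Emx 2 6)
  | 9 => 2^-1 *: (Emx 1 4 + Emx 2 7)
  | 10 => (s3 / 6) *: (Emx 1 6 - Emx 2 5 + 2 *: Emx 3 4)
  | 11 => (s3 / 6) *: (Emx 1 7 + Emx 2 4 + 2 *: Emx 3 5)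
  | 12 => - (s3 / 6) *: (Emx 1 4 - Emx 2 7 - 2 *: Emx 3 6)
  | _ => - (s3 / 6) *: (Emx 1 5 + Emx 2 6 - 2 *: Emx 3 7)
  end.

Definition Xg (i : 'I_14) : 'M[R]_8 := Xn i.

(* sedenions S = O x O = R^16 as column vectors; canonical basis e_k *)
Definition sed_e (k : nat) : 'cV[R]_16 := \col_(r < 16) (if r == k :> nat then 1 else 0).

Definition actS (A : 'M[R]_8) (s : 'cV[R]_(8 + 8)) : 'cV[R]_(8 + 8) :=
  col_mx (A *m usubmx s) (A *m dsubmx s).

Definition ip (n : nat) (x y : 'cV[R]_n) : R := \sum_(r < n) x r 0 * y r 0.

Definition u0 : 'cV[R]_16 := sed_e 4 + sed_e 13.
Definition v0 : 'cV[R]_16 := sed_e 6 + sed_e 15.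

(* g(A,B) = < A.(u0,v0), B.(u0,v0) >_{R^32}  (diagonal action on S x S) *)
Definition gm (A B : 'M[R]_8) : R :=
  ip (actS A u0) (actS B u0) + ip (actS A v0) (actS B v0).

Definition Gram : 'M[R]_14 := \matrix_(i, j) gm (Xg i) (Xg j).
Definition Gram_inv : 'M[R]_14 := invmx Gram.

Definition br (A B : 'M[R]_8) : 'M[R]_8 := A *m B - B *m A.

(* coordinates in the basis X_k (g-orthogonal projection onto g2) *)
Definition coord (A : 'M[R]_8) (k : 'I_14) : R :=
  \sum_(l < 14) Gram_inv k l * gm A (Xg l).

Definition cst (i j k : 'I_14) : R := coord (br (Xg i) (Xg j)) k.

Definition koszul (i j l : 'I_14) : R :=
  2^-1 * (gm (br (Xg i) (Xg j)) (Xg l) - gm (br (Xg j) (Xg l)) (Xg i)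
          + gm (br (Xg l) (Xg i)) (Xg j)).

(* Levi-Civita: nabla_{X_i} X_j = sum_k Gamma i j k X_k *)
Definition Gamma (i j k : 'I_14) : R := \sum_(l < 14) Gram_inv k l * koszul i j l.

(* R(X_a,X_b) X_c = nabla_a nabla_b X_c - nabla_b nabla_a X_c - nabla_[X_a,X_b] X_c
   = sum_m Rcoef a b c m X_m *)
Definition Rcoef (a b c m : 'I_14) : R :=
  \sum_(k < 14) (Gamma b c k * Gamma a k m - Gamma a c k * Gamma b k m)
  - \sum_(k < 14) cst a b k * Gamma k c m.

Definition Ric (b c : 'I_14) : R := \sum_(a < 14) Rcoef a b c a.
Definition RicM : 'M[R]_14 := \matrix_(b, c) Ric b c.

Definition ric_val (i : 'I_14) : R :=
  if (i < 3)%N then 5 / 2 else if (i < 6)%N then 29 / 54 else 5 / 6.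

End G2.

(* Main.v *)
Require Import Defs.
From HB Require Import structures.
From mathcomp Require Import all_boot all_order all_algebra.
From Stdlib Require Import ZArith Lia QArith_base Qreduction.
Close Scope Q_scope.
From mathcomp Require Import ssrZ.
Import ssrZ.Instances.
Import Order.TTheory GRing.Theory Num.Theory.
From mathcomp Require Import ring lra.
Set Implicit Arguments. Unset Strict Implicit. Unset Printing Implicit Defensive.

Open Scope nat_scope.

Definition K : Type := (Q * Q)%type.
Definition kzero (x : K) : bool := Z.eqb (Qnum x.1) Z0 && Z.eqb (Qnum x.2) Z0.
Definition kadd (x y : K) : K :=
  if kzero x then y else if kzero y then x else
  (Qred (Qplus x.1 y.1), Qred (Qplus x.2 y.2)).
Definition kopp (x : K) : K := (Qopp x.1, Qopp x.2).
Definition ksub (x y : K) : K := kadd x (kopp y).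
Definition kmul (x y : K) : K :=
  if kzero x || kzero y then (Qmake 0 1, Qmake 0 1) else
  (Qred (Qplus (Qmult x.1 y.1) (Qmult (Qmake 3 1) (Qmult x.2 y.2))),
   Qred (Qplus (Qmult x.1 y.2) (Qmult x.2 y.1))).
Definition k0 : K := (Qmake 0 1, Qmake 0 1).
Definition kq (a : Z) (b : positive) : K := (Qmake a b, Qmake 0 1).
Definition keqb (x y : K) : bool := Qeq_bool x.1 y.1 && Qeq_bool x.2 y.2.

Fixpoint sumK (n : nat) (f : nat -> K) : K :=
  match n with 0 => k0 | S m => kadd (sumK m f) (f m) end.

Definition MK := nat -> nat -> K.
Definition emC (i j : nat) : MK := fun r c =>
  if (r == i) && (c == j) then kq (-1) 1 else if (r == j) && (c == i) then kq 1 1 else k0.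
Definition madd (A B : MK) : MK := fun r c => kadd (A r c) (B r c).
Definition msub (A B : MK) : MK := fun r c => ksub (A r c) (B r c).
Definition msc (a : K) (A : MK) : MK := fun r c => kmul a (A r c).
Definition khalf : K := kq 1 2.
Definition two : K := kq 2 1.
Definition t6 : K := (Qmake 0 1, Qmake 1 6).

Definition xC (n : nat) : MK :=
  match n with
  | 0 => msc khalf (madd (emC 4 5) (emC 6 7))
  | 1 => msc khalf (msub (emC 4 6) (emC 5 7))
  | 2 => msc khalf (madd (emC 4 7) (emC 5 6))
  | 3 => msc (kopp t6) (madd (msub (msc two (emC 2 3)) (emC 4 5)) (emC 6 7))
  | 4 => msc t6 (madd (madd (msc two (emC 1 3)) (emC 4 6)) (emC 5 7))
  | 5 => msc (kopp t6) (madd (msub (msc two (emC 1 2)) (emC 4 7)) (emC 5 6))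
  | 6 => msc (kopp khalf) (msub (emC 1 7) (emC 2 4))
  | 7 => msc khalf (madd (emC 1 6) (emC 2 5))
  | 8 => msc (kopp khalf) (msub (emC 1 5) (emC 2 6))
  | 9 => msc khalf (madd (emC 1 4) (emC 2 7))
  | 10 => msc t6 (madd (msub (emC 1 6) (emC 2 5)) (msc two (emC 3 4)))
  | 11 => msc t6 (madd (madd (emC 1 7) (emC 2 4)) (msc two (emC 3 5)))
  | 12 => msc (kopp t6) (msub (msub (emC 1 4) (emC 2 7)) (msc two (emC 3 6)))
  | _ => msc (kopp t6) (msub (madd (emC 1 5) (emC 2 6)) (msc two (emC 3 7)))
  end.

Definition gmC (A B : MK) : K :=
  sumK 8 (fun r => kadd (kadd (kadd (kmul (A r 4) (B r 4)) (kmul (A r 5) (B r 5)))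
                                (kmul (A r 6) (B r 6))) (kmul (A r 7) (B r 7))).
Definition brC (A B : MK) : MK := fun r c =>
  ksub (sumK 8 (fun k => kmul (A r k) (B k c))) (sumK 8 (fun k => kmul (B r k) (A k c))).

Definition mk3 (n1 n2 n3 : nat) (f : nat -> nat -> nat -> K) : seq (seq (seq K)) :=
  map (fun i => map (fun j => map (fun k => f i j k) (iota 0 n3)) (iota 0 n2)) (iota 0 n1).
Definition lk3 (t : seq (seq (seq K))) (i j k : nat) : K :=
  nth k0 (nth [::] (nth [::] t i) j) k.
Definition mk4 (f : nat -> nat -> nat -> nat -> K) : seq (seq (seq (seq K))) :=
  map (fun i => mk3 14 8 8 (f i)) (iota 0 14).
Definition lk4 (t : seq (seq (seq (seq K)))) (i j r c : nat) : K :=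
  lk3 (nth [::] t i) j r c.

Definition XT := mk3 14 8 8 xC.
Definition BTf (X : seq (seq (seq K))) (i j r c : nat) : K := brC (lk3 X i) (lk3 X j) r c.
Definition BT := mk4 (BTf XT).
Definition TBf (X : seq (seq (seq K))) (B : seq (seq (seq (seq K)))) (i j l : nat) : K :=
  gmC (lk4 B i j) (lk3 X l).
Definition TBt := mk3 14 14 14 (TBf XT BT).

Definition gdC (i : nat) : K := if i < 3 then kq 1 1 else if i < 6 then kq 1 3 else kq 1 2.
Definition giC (i : nat) : K := if i < 3 then kq 1 1 else if i < 6 then kq 3 1 else kq 2 1.
Definition rvC (i : nat) : K := if i < 3 then kq 5 2 else if i < 6 then kq 29 54 else kq 5 6.

Definition kosF (T : nat -> nat -> nat -> K) (i j l : nat) : K :=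
  kmul khalf (kadd (ksub (T i j l) (T j l i)) (T l i j)).
Definition gamF (T : nat -> nat -> nat -> K) (i j k : nat) : K := kmul (giC k) (kosF T i j k).
Definition cstF (T : nat -> nat -> nat -> K) (i j k : nat) : K := kmul (giC k) (T i j k).

Definition rcC (g cs : nat -> nat -> nat -> K) (a b c m : nat) : K :=
  ksub (sumK 14 (fun k => ksub (kmul (g b c k) (g a k m)) (kmul (g a c k) (g b k m))))
       (sumK 14 (fun k => kmul (cs a b k) (g k c m))).
Definition ricC (g cs : nat -> nat -> nat -> K) (b c : nat) : K :=
  sumK 14 (fun a => rcC g cs a b c a).

Definition GCF (T : seq (seq (seq K))) := mk3 14 14 14 (gamF (lk3 T)).
Definition CCF (T : seq (seq (seq K))) := mk3 14 14 14 (cstF (lk3 T)).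

Lemma all_iota (p : nat -> bool) n i : all p (iota 0 n) -> i < n -> p i.
Proof. by move=> /allP h hi; apply: h; rewrite mem_iota. Qed.

Lemma checkGram_ok : (fun X => all (fun i => all (fun j => keqb (gmC (lk3 X i) (lk3 X j)) (if i == j then gdC i else k0)) (iota 0 14)) (iota 0 14)) XT = true.
Proof. vm_compute. reflexivity. Qed.
Lemma checkGram2_ok : all (fun i => keqb (kmul (gdC i) (giC i)) (kq 1 1)) (iota 0 14) = true.
Proof. vm_compute. reflexivity. Qed.
Lemma checkRic_ok : (fun T => (fun G Cs => all (fun b => all (fun c => keqb (ricC (lk3 G) (lk3 Cs) b c) (if b == c then rvC b else k0)) (iota 0 14)) (iota 0 14)) (GCF T) (CCF T)) TBt = true.
Proof. vm_compute. reflexivity. Qed.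

Lemma gram_fact i j : i < 14 -> j < 14 ->
  keqb (gmC (lk3 XT i) (lk3 XT j)) (if i == j then gdC i else k0).
Proof.
move=> hi hj.
apply: (all_iota (p := fun j => keqb (gmC (lk3 XT i) (lk3 XT j)) (if i == j then gdC i else k0)) _ hj).
exact: (all_iota (p := fun i => all (fun j => keqb (gmC (lk3 XT i) (lk3 XT j)) (if i == j then gdC i else k0)) (iota 0 14)) checkGram_ok hi).
Qed.
Lemma gram2_fact i : i < 14 -> keqb (kmul (gdC i) (giC i)) (kq 1 1).
Proof. move=> hi; exact: (all_iota (p := fun i => keqb (kmul (gdC i) (giC i)) (kq 1 1)) checkGram2_ok hi). Qed.
Lemma ric_fact b c : b < 14 -> c < 14 ->
  keqb (ricC (lk3 (GCF TBt)) (lk3 (CCF TBt)) b c) (if b == c then rvC b else k0).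
Proof.
move=> hb hc.
apply: (all_iota (p := fun c => keqb (ricC (lk3 (GCF TBt)) (lk3 (CCF TBt)) b c) (if b == c then rvC b else k0)) _ hc).
exact: (all_iota (p := fun b => all (fun c => keqb (ricC (lk3 (GCF TBt)) (lk3 (CCF TBt)) b c) (if b == c then rvC b else k0)) (iota 0 14)) checkRic_ok hb).
Qed.

Lemma lk3_mk3 n1 n2 n3 f (i j k : nat) : i < n1 -> j < n2 -> k < n3 ->
  lk3 (mk3 n1 n2 n3 f) i j k = f i j k.
Proof.
move=> hi hj hk.
by rewrite /lk3 /mk3 (nth_map 0) ?size_iota // (nth_map 0) ?size_iota //
  (nth_map 0) ?size_iota // !nth_iota.
Qed.
Lemma lk4_mk4 f (i j r c : nat) : i < 14 -> j < 14 -> r < 8 -> c < 8 ->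
  lk4 (mk4 f) i j r c = f i j r c.
Proof.
move=> hi hj hr hc.
by rewrite /lk4 /mk4 (nth_map 0) ?size_iota // nth_iota // lk3_mk3.
Qed.

Local Open Scope ring_scope.

Section Phi.
Variable R : rcfType.
Definition zR (z : Z) : R := (int_of_Z z)%:~R.
Definition qR (q : Q) : R := zR (Qnum q) / zR (Zpos (Qden q)).
Definition phi (x : K) : R := qR x.1 + qR x.2 * s3 R.

Lemma zR_add x y : zR (Z.add x y) = zR x + zR y.
Proof. rewrite /zR. change (Z.add x y) with (x + y)%R. by rewrite rmorphD /= intrD. Qed.
Lemma zR_mul x y : zR (Z.mul x y) = zR x * zR y.
Proof. rewrite /zR. change (Z.mul x y) with (x * y)%R. by rewrite rmorphM /= intrM. Qed.
Lemma zR_opp x : zR (Z.opp x) = - zR x.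
Proof. rewrite /zR. change (Z.opp x) with (- x)%R. by rewrite rmorphN /= intrN. Qed.
Lemma zR_pos p : zR (Zpos p) != 0.
Proof.
rewrite /zR /= intr_eq0 eqz_nat; apply/eqP => H.
have := Pos2Nat.is_pos p; rewrite H; lia.
Qed.

Lemma qR_eq p q : Qeq p q -> qR p = qR q.
Proof.
rewrite /Qeq /qR => H.
have := congr1 zR H; rewrite !zR_mul => H2.
have h1 := zR_pos (Qden p); have h2 := zR_pos (Qden q).
have -> : zR (Qnum p) = zR (Qnum q) * zR (Zpos (Qden p)) / zR (Zpos (Qden q)).
  by rewrite -H2; field.
by field; apply/andP.
Qed.

Lemma qR_red q : qR (Qred q) = qR q.
Proof. apply: qR_eq; exact: Qred_correct. Qed.

Lemma qR_add p q : qR (Qplus p q) = qR p + qR q.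
Proof.
rewrite /qR /Qplus /=.
change (Zpos (Qden p * Qden q)) with (Z.mul (Zpos (Qden p)) (Zpos (Qden q))).
rewrite zR_add !zR_mul.
have h1 := zR_pos (Qden p); have h2 := zR_pos (Qden q).
by field; apply/andP.
Qed.
Lemma qR_mul p q : qR (Qmult p q) = qR p * qR q.
Proof.
rewrite /qR /Qmult /=.
change (Zpos (Qden p * Qden q)) with (Z.mul (Zpos (Qden p)) (Zpos (Qden q))).
rewrite !zR_mul.
have h1 := zR_pos (Qden p); have h2 := zR_pos (Qden q).
by field; apply/andP.
Qed.
Lemma qR_opp p : qR (Qopp p) = - qR p.
Proof. by rewrite /qR /Qopp /= zR_opp mulNr. Qed.

Lemma s3_sq : s3 R * s3 R = 3.
Proof. by rewrite /s3 -expr2 sqr_sqrtr // ler0n. Qed.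

Lemma phi_kzero x : kzero x -> phi x = 0.
Proof.
case: x => [[a b] [c d]] /andP [/= /Z.eqb_eq ha /Z.eqb_eq hc].
by rewrite /phi /qR /= ha hc /zR /= !mul0r addr0.
Qed.

Lemma phiD x y : phi (kadd x y) = phi x + phi y.
Proof.
rewrite /kadd; case: ifP => hx; first by rewrite (phi_kzero hx) add0r.
case: ifP => hy; first by rewrite (phi_kzero hy) addr0.
rewrite /phi !qR_red !qR_add; ring.
Qed.
Lemma phiN x : phi (kopp x) = - phi x.
Proof. rewrite /phi /kopp /= !qR_opp; ring. Qed.
Lemma phiB x y : phi (ksub x y) = phi x - phi y.
Proof. by rewrite /ksub phiD phiN. Qed.
Lemma phiM x y : phi (kmul x y) = phi x * phi y.
Proof.
rewrite /kmul; case: ifP => [/orP [hx|hy]|_].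
- by rewrite (phi_kzero hx) mul0r /phi /qR /zR /= !mul0r addr0.
- by rewrite (phi_kzero hy) mulr0 /phi /qR /zR /= !mul0r addr0.
rewrite /phi !qR_red !qR_add !qR_mul.
have -> : qR (Qmake 3 1) = s3 R * s3 R by rewrite s3_sq /qR /zR /= divr1.
ring.
Qed.
Lemma phi0 : phi k0 = 0.
Proof. by rewrite /phi /qR /zR /= !mul0r add0r. Qed.
Lemma phi_eqb x y : keqb x y -> phi x = phi y.
Proof.
by case/andP => /Qeq_bool_iff/qR_eq h1 /Qeq_bool_iff/qR_eq h2; rewrite /phi h1 h2.
Qed.
End Phi.

Section Tr.
Variable R : rcfType.
Local Notation phi := (@phi R).

Lemma sumK_phi n (f : nat -> K) : \sum_(i < n) phi (f i) = phi (sumK n f).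
Proof.
elim: n => [|n IH]; first by rewrite big_ord0 /= phi0.
by rewrite big_ord_recr /= IH phiD.
Qed.

Lemma phi_kq1 : phi (kq 1 1) = 1.
Proof. rewrite /phi /qR /zR /=; cbv [Pos.to_nat Pos.iter_op Nat.add]; by field. Qed.
Lemma phi_kqm1 : phi (kq (-1) 1) = -1.
Proof. rewrite /phi /qR /zR /=; cbv [Pos.to_nat Pos.iter_op Nat.add]; by field. Qed.
Lemma phi_half : phi khalf = 2^-1.
Proof. rewrite /phi /qR /zR /=; cbv [Pos.to_nat Pos.iter_op Nat.add]; by field. Qed.
Lemma phi_two : phi two = 2.
Proof. rewrite /phi /qR /zR /=; cbv [Pos.to_nat Pos.iter_op Nat.add]; by field. Qed.
Lemma phi_t6 : phi t6 = s3 R / 6.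
Proof. rewrite /phi /qR /zR /=; cbv [Pos.to_nat Pos.iter_op Nat.add]; by field. Qed.

Lemma emx_phi (i j : nat) (r c : 'I_8) : Emx R i j r c = phi (emC i j r c).
Proof.
rewrite mxE /emC; case: ifP => _; first by rewrite phi_kqm1.
by case: ifP => _; rewrite ?phi_kq1 ?phi0.
Qed.

Lemma mxaddE (A B : 'M[R]_8) r c : (A + B) r c = A r c + B r c.
Proof. by rewrite mxE. Qed.
Lemma mxoppE (A : 'M[R]_8) r c : (- A) r c = - A r c.
Proof. by rewrite mxE. Qed.
Lemma mxscE a (A : 'M[R]_8) r c : (a *: A) r c = a * A r c.
Proof. by rewrite mxE. Qed.

Lemma Xn_phi (n : nat) (r c : 'I_8) : Xn R n r c = phi (xC n r c).
Proof.
do 13 (case: n => [|n]; first by rewrite /= ?(mxaddE, mxoppE, mxscE) /madd /msub /msc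
   ?(phiD, phiB, phiN, phiM) -?emx_phi ?phi_half ?phi_two ?phi_t6; ring).
by rewrite /= ?(mxaddE, mxoppE, mxscE) /madd /msub /msc
   ?(phiD, phiB, phiN, phiM) -?emx_phi ?phi_half ?phi_two ?phi_t6; ring.
Qed.

Definition o4 : 'I_8 := @Ordinal 8 4 isT.
Definition o5 : 'I_8 := @Ordinal 8 5 isT.
Definition o6 : 'I_8 := @Ordinal 8 6 isT.
Definition o7 : 'I_8 := @Ordinal 8 7 isT.

Lemma mul_e (s : 'cV[R]_8) (k : 'I_8) :
  (forall i : 'I_8, s i 0 = if i == k then 1 else 0) -> forall (A : 'M[R]_8) r, (A *m s) r 0 = A r k.
Proof.
move=> hs A r; rewrite mxE (bigD1 k) //= hs eqxx mulr1 big1 ?addr0 // => i /negbTE hi.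
by rewrite hs hi mulr0.
Qed.

Lemma sed_lshift (k : nat) (i : 'I_8) : sed_e R k (lshift 8 i) 0 = if (i : nat) == k then 1 else 0.
Proof. by rewrite mxE. Qed.
Lemma sed_rshift (k : nat) (i : 'I_8) : sed_e R k (rshift 8 i) 0 = if addn 8 i == k then 1 else 0.
Proof. by rewrite mxE. Qed.

Lemma gm_formula (A B : 'M[R]_8) :
  gm A B = \sum_(r < 8) (A r o4 * B r o4 + A r o5 * B r o5 + A r o6 * B r o6 + A r o7 * B r o7).
Proof.
have hu : forall i : 'I_8, usubmx (u0 R : 'cV_(8 + 8)) i 0 = if i == o4 then 1 else 0.
  move=> i; rewrite mxE mxE !sed_lshift; case: i => [[|[|[|[|[|[|[|[|//]]]]]]]] Hi] //=;
  by rewrite ?addr0 ?add0r.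
have hd : forall i : 'I_8, dsubmx (u0 R : 'cV_(8 + 8)) i 0 = if i == o5 then 1 else 0.
  move=> i; rewrite mxE mxE !sed_rshift; case: i => [[|[|[|[|[|[|[|[|//]]]]]]]] Hi] //=;
  by rewrite ?addr0 ?add0r.
have hu' : forall i : 'I_8, usubmx (v0 R : 'cV_(8 + 8)) i 0 = if i == o6 then 1 else 0.
  move=> i; rewrite mxE mxE !sed_lshift; case: i => [[|[|[|[|[|[|[|[|//]]]]]]]] Hi] //=;
  by rewrite ?addr0 ?add0r.
have hd' : forall i : 'I_8, dsubmx (v0 R : 'cV_(8 + 8)) i 0 = if i == o7 then 1 else 0.
  move=> i; rewrite mxE mxE !sed_rshift; case: i => [[|[|[|[|[|[|[|[|//]]]]]]]] Hi] //=;
  by rewrite ?addr0 ?add0r.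
rewrite /gm /ip /actS !big_split_ord /= -!big_split /=; apply: eq_bigr => r _.
rewrite !col_mxEu !col_mxEd !(mul_e hu, mul_e hd, mul_e hu', mul_e hd'); ring.
Qed.
End Tr.

Section Main.
Variable R : rcfType.
Local Notation phi := (@phi R).

Lemma gm_phi (A B : 'M[R]_8) (a b : MK) :
  (forall r c : 'I_8, A r c = phi (a r c)) -> (forall r c : 'I_8, B r c = phi (b r c)) ->
  gm A B = phi (gmC a b).
Proof.
move=> hA hB; rewrite gm_formula /gmC -sumK_phi; apply: eq_bigr => r _.
by rewrite !phiD !phiM !hA !hB.
Qed.

Lemma br_phi (A B : 'M[R]_8) (a b : MK) :
  (forall r c : 'I_8, A r c = phi (a r c)) -> (forall r c : 'I_8, B r c = phi (b r c)) ->
  forall r c : 'I_8, br A B r c = phi (brC a b r c).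
Proof.
move=> hA hB r c; rewrite /br /brC !mxE phiB -!sumK_phi.
by congr (_ - _); apply: eq_bigr => k _; rewrite phiM hA hB.
Qed.

Lemma Xg_phi (i : 'I_14) (r c : 'I_8) : Xg R i r c = phi (xC i r c).
Proof. exact: Xn_phi. Qed.

Lemma XgT_phi (i : 'I_14) (r c : 'I_8) : Xg R i r c = phi (lk3 XT i r c).
Proof. rewrite /XT lk3_mk3 ?ltn_ord //; exact: Xn_phi. Qed.

Lemma BT_phi (i j : 'I_14) (r c : 'I_8) : br (Xg R i) (Xg R j) r c = phi (lk4 BT i j r c).
Proof.
rewrite /BT lk4_mk4 ?ltn_ord // /BTf.
by apply: br_phi => r' c'; exact: XgT_phi.
Qed.

Lemma TB_phi (i j l : 'I_14) : gm (br (Xg R i) (Xg R j)) (Xg R l) = phi (lk3 TBt i j l).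
Proof.
rewrite /TBt lk3_mk3 ?ltn_ord // /TBf.
apply: (@gm_phi _ _ (lk4 BT i j) (lk3 XT l)) => r c; first exact: BT_phi.
exact: XgT_phi.
Qed.

Lemma Gram_eq : Gram R = diag_mx (\row_i phi (gdC i)).
Proof.
apply/matrixP => i j; rewrite !mxE (@gm_phi _ _ (lk3 XT i) (lk3 XT j) (@XgT_phi i) (@XgT_phi j)).
rewrite (@phi_eqb R _ _ (gram_fact (ltn_ord i) (ltn_ord j))).
case: (eqVneq i j) => [<-|hne]; first by rewrite eqxx mulr1n.
have h1 : ((i:nat) == j) = false by exact: (negbTE hne).
by rewrite h1 mulr0n phi0.
Qed.

Lemma Ginv_eq : Gram_inv R = diag_mx (\row_i phi (giC i)).
Proof.
have hm : Gram R *m diag_mx (\row_i phi (giC i)) = 1%:M.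
  rewrite Gram_eq mulmx_diag -diag_const_mx; congr diag_mx; apply/matrixP => i j.
  by rewrite !mxE -phiM (@phi_eqb R _ _ (gram2_fact (ltn_ord j))) phi_kq1.
have [hu _] := mulmx1_unit hm.
by rewrite /Gram_inv -[RHS]mul1mx -(mulVmx hu) -mulmxA hm mulmx1.
Qed.

Lemma diag_sum (d : 'rV[R]_14) (k : 'I_14) (F : 'I_14 -> R) :
  \sum_(l < 14) diag_mx d k l * F l = d 0 k * F k.
Proof.
rewrite (bigD1 k) //= mxE eqxx mulr1n big1 ?addr0 // => l.
by rewrite mxE eq_sym => /negPf ->; rewrite mulr0n mul0r.
Qed.

Lemma Gamma_phi (i j k : 'I_14) :
  Gamma R i j k = phi (lk3 (GCF TBt) i j k).
Proof.
rewrite /GCF lk3_mk3 ?ltn_ord // /Gamma Ginv_eq diag_sum mxE /gamF phiM; congr (_ * _).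
by rewrite /koszul /kosF phiM phi_half phiD phiB !TB_phi.
Qed.

Lemma cst_phi (i j k : 'I_14) :
  cst R i j k = phi (lk3 (CCF TBt) i j k).
Proof.
by rewrite /CCF lk3_mk3 ?ltn_ord // /cst /Defs.coord Ginv_eq diag_sum mxE /cstF phiM TB_phi.
Qed.

Lemma Ric_phi (b c : 'I_14) :
  Ric R b c = phi (ricC (lk3 (GCF TBt)) (lk3 (CCF TBt)) b c).
Proof.
rewrite /Ric /ricC -sumK_phi; apply: eq_bigr => a _.
rewrite /Rcoef /rcC phiB -!sumK_phi; congr (_ - _); apply: eq_bigr => k _.
  by rewrite phiB !phiM !Gamma_phi.
by rewrite phiM Gamma_phi cst_phi.
Qed.

End Main.

Lemma rv_phi (R : rcfType) (b : 'I_14) : phi R (rvC b) = ric_val R b.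
Proof.
rewrite /rvC /ric_val; case h3: (leq b.+1 3); last case h6: (leq b.+1 6);
rewrite /phi /qR /zR /=; cbv [Pos.to_nat Pos.iter_op Nat.add]; by field.
Qed.

Lemma rv_pos (R : rcfType) (b : 'I_14) : 0 < ric_val R b.
Proof. rewrite /ric_val; case: ifP => _; last case: ifP => _; lra. Qed.

Theorem mainTheorem2 (R : rcfType) :
  (forall v : 'rV[R]_14, v != 0 -> 0 < (v *m RicM R *m v^T) 0 0)
  /\ RicM R = diag_mx (\row_(i < 14) ric_val R i).
Proof.
have hR : RicM R = diag_mx (\row_i ric_val R i).
  apply/matrixP => b c; rewrite !mxE Ric_phi (@phi_eqb R _ _ (ric_fact (ltn_ord b) (ltn_ord c))).
  case: (eqVneq b c) => [<-|hne]; first by rewrite eqxx mulr1n rv_phi.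
  have h1 : ((b:nat) == c) = false by exact: (negbTE hne).
  by rewrite h1 mulr0n phi0.
split => //.
move=> v hv; rewrite hR mul_mx_diag mxE.
under eq_bigr do rewrite !mxE.
have [j hj] : exists j, v 0 j != 0.
  case: (pickP (fun j => v 0 j != 0)) => [j hj|h]; first by exists j.
  move/eqP: hv; case; apply/matrixP => i j; rewrite (ord1 i) mxE.
  by move: (h j) => /negbFE/eqP.
rewrite (bigD1 j) //=.
have ha : 0 < v 0 j * ric_val R j * v 0 j.
  have h2 : 0 < v 0 j ^+ 2 by rewrite lt_def sqrf_eq0 hj sqr_ge0.
  have := rv_pos R j; nra.
have hS : 0 <= \sum_(i < 14 | i != j) v 0 i * ric_val R i * v 0 i.
  apply: sumr_ge0 => i _.
  have := sqr_ge0 (v 0 i); have := rv_pos R i; nra.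
lra.
Qed.
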